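(* Let $A_1,A_2,B_1,B_2,C_1\in\mathbb{C}^{r\times r}$ with $C_1+mI$ invertible for all $m\ge0$, $A_iB_1=B_1A_i$ ($i=1,2$) and $C_1B_2=B_2C_1$. Let $n\ge1$ and suppose $A_2+mI$ is invertible for all $m\ge0$. Then $$F_{13}[A_2+nI]=F_{13}+x_2\Big[\sum_{n_1=1}^nF_{13}[A_2+n_1I,B_2+I,C_1+I]\Big]B_2C_1^{-1}+x_3B_1\Big[\sum_{n_1=1}^nF_{13}[A_2+n_1I,B_1+I,C_1+I]\Big]C_1^{-1}.$$ Furthermore, if $A_2-n_1I$ is invertible for $0\le n_1\le n$, then $$F_{13}[A_2-nI]=F_{13}-x_2\Big[\sum_{n_1=0}^{n-1}F_{13}[A_2-n_1I,B_2+I,C_1+I]\Big]B_2C_1^{-1}-x_3B_1\Big[\sum_{n_1=0}^{n-1}F_{13}[A_2-n_1I,B_1+I,C_1+I]\Big]C_1^{-1}.$$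
   Context: For $M\in\mathbb{C}^{r\times r}$: $(M)_0=I$, $(M)_m=M(M+I)\cdots(M+(m-1)I)$, $(M)^{-1}_m=((M)_m)^{-1}$. The three-variable Lauricella matrix function $$F_{13}=F_{13}[A_1,A_2,B_1,B_2;C_1;x_1,x_2,x_3]=\sum_{m_1,m_2,m_3\ge0}(A_1)_{m_1}(A_2)_{m_2+m_3}(B_1)_{m_1+m_3}(B_2)_{m_2}(C_1)^{-1}_{m_1+m_2+m_3}\frac{x_1^{m_1}x_2^{m_2}x_3^{m_3}}{m_1!m_2!m_3!},$$ with scalar variables $x_i$ and matrix products in the written order; identities are of formal power series in the $x_i$. $F_{13}[\dots]$ lists only the shifted parameters, all others unchanged. *)

(* Defs.v *)
From HB Require Import structures.
From mathcomp Require Import all_boot all_order all_algebra.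
From mathcomp Require Import complex reals.
Set Implicit Arguments. Unset Strict Implicit. Unset Printing Implicit Defensive.
Import Order.TTheory GRing.Theory Num.Theory.
Local Open Scope ring_scope.

Section Defs.
Variables (K : comUnitRingType) (r : nat).

Definition mpoch (M : 'M[K]_r) (m : nat) : 'M[K]_r :=
  \big[@mulmx K r r r / 1%:M]_(i < m) (M + (i%:R)%:M).

Definition mpochinv (M : 'M[K]_r) (m : nat) : 'M[K]_r := invmx (mpoch M m).

(* Formal power series in x1, x2, x3 with r x r matrix coefficients,
   represented by their coefficient function (m1, m2, m3) |-> coefficient
   of x1^m1 x2^m2 x3^m3. *)
Definition fps3 := nat -> nat -> nat -> 'M[K]_r.

Definition F13 (A1 A2 B1 B2 C1 : 'M[K]_r) : fps3 := fun m1 m2 m3 =>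
  ((m1`! * m2`! * m3`!)%:R)^-1 *:
    (mpoch A1 m1 *m mpoch A2 (m2 + m3) *m mpoch B1 (m1 + m3)
       *m mpoch B2 m2 *m mpochinv C1 (m1 + m2 + m3)).

Definition fadd (F G : fps3) : fps3 := fun m1 m2 m3 => F m1 m2 m3 + G m1 m2 m3.
Definition fopp (F : fps3) : fps3 := fun m1 m2 m3 => - F m1 m2 m3.
(* multiplication by the variable x2, resp. x3 *)
Definition fx2 (F : fps3) : fps3 := fun m1 m2 m3 =>
  if m2 is m2'.+1 then F m1 m2' m3 else 0.
Definition fx3 (F : fps3) : fps3 := fun m1 m2 m3 =>
  if m3 is m3'.+1 then F m1 m2 m3' else 0.
Definition fmulr (F : fps3) (M : 'M[K]_r) : fps3 := fun m1 m2 m3 => F m1 m2 m3 *m M.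
Definition fmull (M : 'M[K]_r) (F : fps3) : fps3 := fun m1 m2 m3 => M *m F m1 m2 m3.
Definition fsum (a b : nat) (F : nat -> fps3) : fps3 := fun m1 m2 m3 =>
  \sum_(a <= k < b) F k m1 m2 m3.
Definition feq (F G : fps3) : Prop := forall m1 m2 m3, F m1 m2 m3 = G m1 m2 m3.

End Defs.

(* Main.v *)
Require Import Defs.
From HB Require Import structures.
From mathcomp Require Import all_boot all_order all_algebra.
From mathcomp Require Import complex reals.
From mathcomp Require Import ring.
Import Order.TTheory GRing.Theory Num.Theory.
Local Open Scope ring_scope.


Section Aux.
Variables (K : numFieldType) (r : nat).
Implicit Types (M N D C : 'M[K]_r).

Lemma mpoch0 M : mpoch M 0 = 1%:M.
Proof. by rewrite /mpoch big_ord0. Qed.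

Lemma mpochSl M k : mpoch M k.+1 = M *m mpoch (M + 1%:M) k.
Proof.
rewrite /mpoch big_ord_recl /= raddf0 addr0.
congr (_ *m _); apply: eq_bigr => i _.
by rewrite /bump /= add1n -nat1r raddfD /= addrA.
Qed.

Lemma mpochSr M k : mpoch M k.+1 = mpoch M k *m (M + (k%:R)%:M).
Proof.
elim: k M => [|k IH] M.
  by rewrite mpochSl mpoch0 mpoch0 mulmx1 mul1mx raddf0 addr0.
rewrite mpochSl IH mulmxA -mpochSl -addrA -raddfD /= nat1r.
done.
Qed.

Lemma comm_inv M N : M *m N = N *m M -> M *m invmx N = invmx N *m M.
Proof.
move=> hMN; case: (boolP (N \in unitmx)) => hN; last by rewrite invmx_out ?inE.
rewrite -[RHS]mulmx1 -(mulmxV hN) !mulmxA -[invmx N *m M *m N]mulmxA hMN.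
by rewrite mulmxA mulVmx // mul1mx.
Qed.

Lemma comm_pochL M N k : M *m N = N *m M -> M *m mpoch N k = mpoch N k *m M.
Proof.
move=> h; elim: k => [|k IH]; first by rewrite mpoch0 mul1mx mulmx1.
rewrite mpochSr mulmxA IH -!mulmxA; congr (_ *m _).
by rewrite mulmxDl mulmxDr h scalar_mxC.
Qed.

Lemma comm_shift M N (a : K) : M *m N = N *m M -> M *m (N + a%:M) = (N + a%:M) *m M.
Proof. by move=> h; rewrite mulmxDl mulmxDr h scalar_mxC. Qed.

Lemma invmxM M N : M \in unitmx -> N \in unitmx ->
  invmx (M *m N) = invmx N *m invmx M.
Proof.
move=> hM hN; have hMN : M *m N \in unitmx by rewrite unitmx_mul hM hN.
rewrite -[RHS](mulKmx hMN).
have -> : M *m N *m (invmx N *m invmx M) = 1%:M.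
  by rewrite -mulmxA (mulmxA N) mulmxV // mul1mx mulmxV.
by rewrite mulmx1.
Qed.

Lemma mpoch_unit M k : (forall i, M + (i%:R)%:M \in unitmx) -> mpoch M k \in unitmx.
Proof.
move=> h; elim: k => [|k IH]; first by rewrite mpoch0 unitmx1.
by rewrite mpochSr unitmx_mul IH h.
Qed.

Lemma mpochinvS C k : (forall i, C + (i%:R)%:M \in unitmx) ->
  mpochinv C k.+1 = mpochinv (C + 1%:M) k *m invmx C.
Proof.
move=> h; rewrite /mpochinv mpochSl invmxM //.
  by have := h 0%N; rewrite raddf0 addr0.
apply: mpoch_unit => i; rewrite -addrA -raddfD /= nat1r; exact: h.
Qed.

Lemma mpochSr' M k : mpoch M k.+1 = mpoch (M + 1%:M) k *m M.
Proof.
rewrite mpochSl comm_pochL //.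
by rewrite mulmxDr mulmxDl mulmx1 mul1mx.
Qed.

Lemma mpoch_diff D k :
  mpoch (D + 1%:M) k.+1 - mpoch D k.+1 = (k.+1)%:R *: mpoch (D + 1%:M) k.
Proof.
rewrite mpochSr mpochSl.
have hc : D *m mpoch (D + 1%:M) k = mpoch (D + 1%:M) k *m D.
  by apply: comm_pochL; rewrite mulmxDr mulmxDl mulmx1 mul1mx.
rewrite hc -mulmxBr.
have -> : D + 1%:M + (k%:R)%:M - D = (k.+1%:R)%:M.
  rewrite -[D + 1%:M + _]addrA addrC.
  by rewrite addrK -raddfD /= nat1r.
by rewrite scalar_mxC mul_scalar_mx.
Qed.

Lemma fact_step a b c :
  ((a`! * b.+1`! * c`!)%:R)^-1 * (b.+1)%:R = ((a`! * b`! * c`!)%:R)^-1 :> K.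
Proof.
rewrite factS !natrM.
have h1 : (a`!)%:R != 0 :> K by rewrite pnatr_eq0 -lt0n fact_gt0.
have h2 : (b`!)%:R != 0 :> K by rewrite pnatr_eq0 -lt0n fact_gt0.
have h3 : (c`!)%:R != 0 :> K by rewrite pnatr_eq0 -lt0n fact_gt0.
have h4 : (b.+1)%:R != 0 :> K by rewrite pnatr_eq0.
field.
by rewrite h1 h2 h3 nat1r h4.
Qed.

End Aux.
Section Step.
Variables (K : numFieldType) (r : nat).
Implicit Types (M N D C P Q : 'M[K]_r).

Lemma fact_step3 a b c :
  ((a`! * b`! * c.+1`!)%:R)^-1 * (c.+1)%:R = ((a`! * b`! * c`!)%:R)^-1 :> K.
Proof.
rewrite factS !natrM.
have h1 : (a`!)%:R != 0 :> K by rewrite pnatr_eq0 -lt0n fact_gt0.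
have h2 : (b`!)%:R != 0 :> K by rewrite pnatr_eq0 -lt0n fact_gt0.
have h3 : (c`!)%:R != 0 :> K by rewrite pnatr_eq0 -lt0n fact_gt0.
have h4 : (c.+1)%:R != 0 :> K by rewrite pnatr_eq0.
field.
by rewrite h1 h2 h3 nat1r h4.
Qed.

Lemma x2_term P Q B1 B2 C1 (sc : K) a b c :
  (forall m : nat, C1 + (m%:R)%:M \in unitmx) -> C1 *m B2 = B2 *m C1 ->
  (sc *: (P *m Q *m mpoch B1 (a + c) *m mpoch (B2 + 1%:M) b
     *m mpochinv (C1 + 1%:M) (a + b + c))) *m B2 *m invmx C1
  = sc *: (P *m Q *m mpoch B1 (a + c) *m mpoch B2 b.+1
     *m mpochinv C1 (a + b.+1 + c)).
Proof.
move=> hC hCB.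
have -> : (a + b.+1 + c = (a + b + c).+1)%N by rewrite addnS addSn.
rewrite mpochinvS // mpochSr' -!scalemxAl; congr (_ *: _).
have hc : B2 *m mpochinv (C1 + 1%:M) (a + b + c) = mpochinv (C1 + 1%:M) (a + b + c) *m B2.
  apply: comm_inv; apply: comm_pochL.
  by rewrite mulmxDl mulmxDr mulmx1 mul1mx hCB.
rewrite !mulmxA.
by rewrite -[in RHS](mulmxA _ B2) hc !mulmxA.
Qed.

Lemma x3_term P Q B1 B2 C1 (sc : K) a b c :
  (forall m : nat, C1 + (m%:R)%:M \in unitmx) ->
  B1 *m P = P *m B1 -> B1 *m Q = Q *m B1 ->
  B1 *m (sc *: (P *m Q *m mpoch (B1 + 1%:M) (a + c) *m mpoch B2 b
     *m mpochinv (C1 + 1%:M) (a + b + c)) *m invmx C1)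
  = sc *: (P *m Q *m mpoch B1 (a + c.+1) *m mpoch B2 b
     *m mpochinv C1 (a + b + c.+1)).
Proof.
move=> hC hP hQ.
rewrite mulmxA !addnS mpochinvS // mpochSl -scalemxAr -scalemxAl; congr (_ *: _).
by rewrite !mulmxA hP -[P *m B1 *m Q]mulmxA hQ !mulmxA.
Qed.

Lemma diffF A1 B1 B2 C1 D m1 m2 m3 :
  F13 A1 (D + 1%:M) B1 B2 C1 m1 m2 m3 - F13 A1 D B1 B2 C1 m1 m2 m3 =
  ((m1`! * m2`! * m3`!)%:R)^-1 *:
    (mpoch A1 m1 *m (mpoch (D + 1%:M) (m2 + m3) - mpoch D (m2 + m3))
      *m mpoch B1 (m1 + m3) *m mpoch B2 m2 *m mpochinv C1 (m1 + m2 + m3)).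
Proof.
by rewrite /F13 -scalerBr !mulmxBr !mulmxBl.
Qed.

End Step.
Section Step2.
Variables (K : numFieldType) (r : nat).
Implicit Types (M N D C P Q : 'M[K]_r).

Lemma scal_pull (P Q R1 R2 R3 : 'M[K]_r) (s t : K) :
  s *: (P *m (t *: Q) *m R1 *m R2 *m R3) = (s * t) *: (P *m Q *m R1 *m R2 *m R3).
Proof. by rewrite -scalemxAr !scalemxAl scalerA. Qed.

Lemma step A1 B1 B2 C1 D m1 m2 m3 :
  (forall m : nat, C1 + (m%:R)%:M \in unitmx) ->
  B1 *m A1 = A1 *m B1 -> B1 *m D = D *m B1 -> C1 *m B2 = B2 *m C1 ->
  F13 A1 (D + 1%:M) B1 B2 C1 m1 m2 m3 = F13 A1 D B1 B2 C1 m1 m2 m3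
  + fx2 (fmulr (fmulr (F13 A1 (D + 1%:M) B1 (B2 + 1%:M) (C1 + 1%:M)) B2) (invmx C1)) m1 m2 m3
  + fx3 (fmull B1 (fmulr (F13 A1 (D + 1%:M) (B1 + 1%:M) B2 (C1 + 1%:M)) (invmx C1))) m1 m2 m3.
Proof.
move=> hC hA hD hCB.
have hP : B1 *m mpoch A1 m1 = mpoch A1 m1 *m B1 by apply: comm_pochL.
have hQ k : B1 *m mpoch (D + 1%:M) k = mpoch (D + 1%:M) k *m B1.
  by apply: comm_pochL; apply: comm_shift.
apply/eqP; rewrite -addrA addrC -subr_eq; apply/eqP.
rewrite diffF.
case: m2 => [|b]; case: m3 => [|c] /=; rewrite /fmulr /fmull /F13.
- by rewrite addn0 !mpoch0 subrr mulmx0 !mul0mx scaler0 addr0.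
- rewrite x3_term ?hP ?hQ //.
  rewrite ?addn0 ?add0n ?addnS ?addSn mpoch_diff scal_pull fact_step3.
  by rewrite add0r.
- rewrite x2_term //.
  rewrite ?addn0 ?add0n ?addnS ?addSn mpoch_diff scal_pull fact_step.
  by rewrite addr0.
- rewrite x2_term // x3_term ?hP ?hQ //.
  rewrite ?addn0 ?add0n ?addnS ?addSn mpoch_diff scal_pull -scalerDl.
  congr (_ *: _).
  have -> : ((b + c).+2 = b.+1 + c.+1)%N by rewrite addnS addSn.
  by rewrite natrD mulrDr fact_step fact_step3.
Qed.
End Step2.
Lemma rearr (V : zmodType) (a b c d e : V) : a + b + c + d + e = a + (b + d) + (c + e).
Proof. by rewrite -!addrA; congr (_ + (_ + _)); rewrite addrCA. Qed.

Section Tele.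
Variables (K : numFieldType) (r : nat).
Implicit Types (M N D C P Q : 'M[K]_r).

Lemma tele_up A1 A2 B1 B2 C1 n :
  (forall m : nat, C1 + (m%:R)%:M \in unitmx) ->
  B1 *m A1 = A1 *m B1 -> B1 *m A2 = A2 *m B1 -> C1 *m B2 = B2 *m C1 ->
  forall m1 m2 m3,
  F13 A1 (A2 + (n%:R)%:M) B1 B2 C1 m1 m2 m3 =
      (fadd (fadd (F13 A1 A2 B1 B2 C1)
        (fx2 (fmulr (fmulr (fsum 1 n.+1 (fun n1 =>
                F13 A1 (A2 + (n1%:R)%:M) B1 (B2 + 1%:M) (C1 + 1%:M))) B2)
              (invmx C1))))
        (fx3 (fmull B1 (fmulr (fsum 1 n.+1 (fun n1 =>
                F13 A1 (A2 + (n1%:R)%:M) (B1 + 1%:M) B2 (C1 + 1%:M)))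
              (invmx C1))))) m1 m2 m3.
Proof.
move=> hC hA hA2 hCB; elim: n => [|n IH] m1 m2 m3.
  rewrite raddf0 addr0 /fadd.
  by case: m2 => [|b]; case: m3 => [|c];
     rewrite /= /fmulr /fmull /fsum ?big_geq // ?mul0mx ?mulmx0 ?addr0.
have eD : A2 + (n.+1%:R)%:M = A2 + (n%:R)%:M + 1%:M.
  by rewrite -natr1 raddfD addrA.
rewrite eD step //; last by apply: comm_shift.
rewrite IH /fadd.
case: m2 => [|b]; case: m3 => [|c];
  rewrite /= /fmulr /fmull /fsum ?(big_nat_recr n.+1) //= ?eD
    ?mulmxDl ?mulmxDr ?addr0 ?rearr ?addrA //.
Qed.

Lemma comm_sub M N (a : K) : M *m N = N *m M -> M *m (N - a%:M) = (N - a%:M) *m M.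
Proof. by move=> h; rewrite -raddfN; apply: comm_shift. Qed.

Lemma tele_down A1 A2 B1 B2 C1 n :
  (forall m : nat, C1 + (m%:R)%:M \in unitmx) ->
  B1 *m A1 = A1 *m B1 -> B1 *m A2 = A2 *m B1 -> C1 *m B2 = B2 *m C1 ->
  forall m1 m2 m3,
  F13 A1 (A2 - (n%:R)%:M) B1 B2 C1 m1 m2 m3 =
      (fadd (fadd (F13 A1 A2 B1 B2 C1)
        (fopp (fx2 (fmulr (fmulr (fsum 0 n (fun n1 =>
                F13 A1 (A2 - (n1%:R)%:M) B1 (B2 + 1%:M) (C1 + 1%:M))) B2)
              (invmx C1)))))
        (fopp (fx3 (fmull B1 (fmulr (fsum 0 n (fun n1 =>
                F13 A1 (A2 - (n1%:R)%:M) (B1 + 1%:M) B2 (C1 + 1%:M)))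
              (invmx C1)))))) m1 m2 m3.
Proof.
move=> hC hA hA2 hCB; elim: n => [|n IH] m1 m2 m3.
  rewrite raddf0 subr0 /fadd /fopp.
  by case: m2 => [|b]; case: m3 => [|c];
     rewrite /= /fmulr /fmull /fsum ?big_geq // ?mul0mx ?mulmx0 ?oppr0 ?addr0.
have eD : A2 - (n.+1%:R)%:M + 1%:M = A2 - (n%:R)%:M.
  by rewrite -natr1 raddfD opprD addrA subrK.
have hs := @step K r A1 B1 B2 C1 (A2 - (n.+1%:R)%:M) m1 m2 m3 hC hA (comm_sub _ _ _ hA2) hCB.
rewrite eD in hs.
have -> : F13 A1 (A2 - (n.+1%:R)%:M) B1 B2 C1 m1 m2 m3 =
  F13 A1 (A2 - (n%:R)%:M) B1 B2 C1 m1 m2 m3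
  - fx2 (fmulr (fmulr (F13 A1 (A2 - (n%:R)%:M) B1 (B2 + 1%:M) (C1 + 1%:M)) B2) (invmx C1)) m1 m2 m3
  - fx3 (fmull B1 (fmulr (F13 A1 (A2 - (n%:R)%:M) (B1 + 1%:M) B2 (C1 + 1%:M)) (invmx C1))) m1 m2 m3.
  by rewrite hs addrAC addrK addrK.
clear hs.
rewrite IH /fadd /fopp.
case: m2 => [|b]; case: m3 => [|c];
  rewrite /= /fmulr /fmull /fsum ?(big_nat_recr n) //=
    ?mulmxDl ?mulmxDr ?opprD ?oppr0 ?addr0 ?rearr ?addrA //.
Qed.

End Tele.

Theorem mainTheorem18 (R : realType) (r : nat)
  (A1 A2 B1 B2 C1 : 'M[R[i]]_r) (n : nat) :
  (forall m : nat, C1 + (m%:R)%:M \in unitmx) ->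
  A1 *m B1 = B1 *m A1 -> A2 *m B1 = B1 *m A2 ->
  C1 *m B2 = B2 *m C1 ->
  (1 <= n)%N ->
  (forall m : nat, A2 + (m%:R)%:M \in unitmx) ->
  feq (F13 A1 (A2 + (n%:R)%:M) B1 B2 C1)
      (fadd (fadd (F13 A1 A2 B1 B2 C1)
        (fx2 (fmulr (fmulr (fsum 1 n.+1 (fun n1 =>
                F13 A1 (A2 + (n1%:R)%:M) B1 (B2 + 1%:M) (C1 + 1%:M))) B2)
              (invmx C1))))
        (fx3 (fmull B1 (fmulr (fsum 1 n.+1 (fun n1 =>
                F13 A1 (A2 + (n1%:R)%:M) (B1 + 1%:M) B2 (C1 + 1%:M)))
              (invmx C1)))))
  /\
  ((forall n1 : nat, (n1 <= n)%N -> A2 - (n1%:R)%:M \in unitmx) ->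
   feq (F13 A1 (A2 - (n%:R)%:M) B1 B2 C1)
      (fadd (fadd (F13 A1 A2 B1 B2 C1)
        (fopp (fx2 (fmulr (fmulr (fsum 0 n (fun n1 =>
                F13 A1 (A2 - (n1%:R)%:M) B1 (B2 + 1%:M) (C1 + 1%:M))) B2)
              (invmx C1)))))
        (fopp (fx3 (fmull B1 (fmulr (fsum 0 n (fun n1 =>
                F13 A1 (A2 - (n1%:R)%:M) (B1 + 1%:M) B2 (C1 + 1%:M)))
              (invmx C1))))))).
Proof.
move=> hC hA hA2 hCB _ _.
split; [|move=> _]; move=> m1 m2 m3.
- exact: (@tele_up (R[i]) r A1 A2 B1 B2 C1 n hC (esym hA) (esym hA2) hCB).
- exact: (@tele_down (R[i]) r A1 A2 B1 B2 C1 n hC (esym hA) (esym hA2) hCB).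
Qed.
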